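(* Let $G$ be a divisible abelian group (in particular $G$ is nontrivial). Then $Spec_R(G)=\{1,\infty\}$.
   Context: A group $G$ is divisible if for every $x\in G$ and every positive integer $k$ there is $y\in G$ with $y^k=x$ (here the trivial group is excluded, so divisible groups are infinite). For an endomorphism $\varphi$ of $G$, $x,y$ are $\varphi$-conjugated if $x=zy\varphi(z)^{-1}$ for some $z\in G$; $R(\varphi)\in\mathbb{N}\cup\{\infty\}$ is the number of $\varphi$-conjugacy classes (all infinite cardinals identified with $\infty$). $Spec_R(G)=\{R(\varphi)\mid\varphi\in{\rm Aut}(G)\}$. *)

(* Defs.v *)
(* An abelian group is a zmodType (written additively). *)
From HB Require Import structures.
From mathcomp Require Import all_boot all_order all_algebra.
Set Implicit Arguments. Unset Strict Implicit. Unset Printing Implicit Defensive.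
Import GRing.Theory.
Local Open Scope ring_scope.

Definition divisible (G : zmodType) : Prop :=
  forall (x : G) (k : nat), (0 < k)%N -> exists y : G, y *+ k = x.

Definition nontrivial (G : zmodType) : Prop := exists x : G, x != 0.

Definition is_automorphism (G : zmodType) (phi : G -> G) : Prop :=
  (forall x y : G, phi (x + y) = phi x + phi y) /\ bijective phi.

(* x and y are phi-conjugated: x = z + y - phi z for some z (additive form of z y phi(z)^-1) *)
Definition twisted_conj (G : zmodType) (phi : G -> G) (x y : G) : Prop :=
  exists z : G, x = z + y - phi z.

Definition pairwise_nonconj (G : zmodType) (phi : G -> G) (s : seq G) : Prop :=
  forall i j : nat, (i < size s)%N -> (j < size s)%N ->
    twisted_conj phi (nth 0 s i) (nth 0 s j) -> i = j.

(* Reidemeister number: [reidemeister phi (Some n)] means R(phi) = n (finite),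
   [reidemeister phi None] means R(phi) = infinity (infinitely many classes). *)
Definition reidemeister (G : zmodType) (phi : G -> G) (r : option nat) : Prop :=
  match r with
  | Some n => exists s : seq G, size s = n /\ pairwise_nonconj phi s /\
                forall x : G, exists2 y, y \in s & twisted_conj phi x y
  | None => forall n : nat, exists s : seq G, size s = n /\ pairwise_nonconj phi s
  end.

Definition SpecR (G : zmodType) (r : option nat) : Prop :=
  exists phi : G -> G, is_automorphism phi /\ reidemeister phi r.

(* Main.v *)
Require Import Defs.
From mathcomp Require Import all_boot all_order all_algebra.
From Stdlib Require Import Classical ClassicalEpsilon.
Import GRing.Theory.
Local Open Scope ring_scope.

Section Aux.
Variable G : zmodType.
Variable phi : G -> G.
Hypothesis phiD : forall x y : G, phi (x + y) = phi x + phi y.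

Definition D (a : G) := exists z, a = z - phi z.

Lemma phi0 : phi 0 = 0.
Proof. by apply: (addrI (phi 0)); rewrite -phiD !addr0. Qed.

Lemma phiN x : phi (- x) = - phi x.
Proof. by apply/eqP; rewrite -subr_eq0 opprK -phiD addNr phi0. Qed.

Lemma D0 : D 0. Proof. by exists 0; rewrite phi0 subr0. Qed.
Lemma DD a b : D a -> D b -> D (a + b).
Proof. by case=> [z ->] [w ->]; exists (z + w); rewrite phiD opprD addrACA. Qed.
Lemma DN a : D a -> D (- a).
Proof. by case=> [z ->]; exists (- z); rewrite phiN opprB opprK addrC. Qed.
Lemma DMn a k : D a -> D (a *+ k).
Proof. move=> Da; elim: k => [|k IH]; first exact: D0. by rewrite mulrS; apply: DD. Qed.

Lemma conjD x y : twisted_conj phi x y <-> D (x - y).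
Proof.
split=> [[z ->]|[z e]]; first by exists z; rewrite addrAC addrK.
by exists z; apply/eqP; rewrite addrAC -subr_eq e.
Qed.

Lemma cover_all (hdiv : divisible G) (s : seq G) :
  (forall x : G, exists2 y, y \in s & twisted_conj phi x y) -> forall x, D x.
Proof.
move=> cov.
set n := size s.
have n0 : (0 < n)%N.
  case: (cov 0) => y ys _; rewrite /n; case: s ys {cov n} => //.
have key : forall y : G, exists2 m, (0 < m <= n)%N & D (y *+ m).
  move=> y.
  have H : forall k : 'I_n.+1, exists i : 'I_n, D (y *+ k - nth 0 s i).
    move=> k; case: (cov (y *+ k)) => w ws /conjD Dw.
    have iw : (index w s < n)%N by rewrite index_mem.
    by exists (Ordinal iw); rewrite /= nth_index.
  pose f k := proj1_sig (constructive_indefinite_description _ (H k)).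
  have fP (k : 'I_n.+1) : D (y *+ k - nth 0 s (f k)) 
    by rewrite /f; case: constructive_indefinite_description.
  have : ~ injective f.
    move=> inj; have := leq_card f inj; rewrite !card_ord ltnn //.
  move=> ninj.
  have [i [j [fij nij]]] : exists i j, f i = f j /\ i <> j.
    apply: NNPP => hne; apply: ninj => i j e; apply: NNPP => ne; apply: hne.
    by exists i, j.
  have Dij : D (y *+ i - y *+ j).
    have := DD _ _ (fP i) (DN _ (fP j)); rewrite fij.
    by rewrite opprB addrA subrK.
  have nij' : (i : nat) != j by apply/eqP => e; apply: nij; apply: val_inj.
  case: (ltngtP i j) nij' => // hij _.
  - exists (j - i)%N.
      rewrite subn_gt0 hij /=; apply: leq_trans (leq_subr i j) _; rewrite -ltnS; exact: ltn_ord.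
    rewrite mulrnBr; last exact: ltnW hij.
    by have := DN _ Dij; rewrite opprB.
  - exists (i - j)%N.
      rewrite subn_gt0 hij /=; apply: leq_trans (leq_subr j i) _; rewrite -ltnS; exact: ltn_ord.
    rewrite mulrnBr; last exact: ltnW hij.
    exact: Dij.
move=> x.
case: (hdiv x n`! (fact_gt0 n)) => y <-.
case: (key y) => m /andP [m0 mn] Dm.
have : (m %| n`!)%N by rewrite dvdn_fact // m0.
case/dvdnP => q ->; rewrite mulnC mulrnA; exact: DMn.
Qed.
End Aux.

Theorem proposition3 (G : zmodType) (hdiv : divisible G) (hnt : nontrivial G) :
  forall r : option nat, SpecR G r <-> (r = Some 1%N \/ r = None).
Proof.
move=> r; split.
- case: r => [n|]; last by right.
  case=> phi [[phiD _] [s [sz [pnc cov]]]]; left.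
  have DA := @cover_all _ phi phiD hdiv s cov.
  case: n sz => [|[|n]] sz //.
    by case: (cov 0) => y; case: s sz {pnc cov}.
  have h : twisted_conj phi (nth 0 s 0) (nth 0 s 1).
    by apply/conjD; apply: DA.
  by have := pnc 0%N 1%N; rewrite sz => /(_ isT isT h).
- case=> ->.
  + exists (fun x => - x); split.
      split; first by move=> x y; rewrite opprD.
      by exists (fun x => - x) => x; rewrite opprK.
    exists [:: 0]; split=> //; split.
      by move=> [|i] [|j].
    move=> x; exists 0; first by rewrite inE.
    case: (hdiv x 2 isT) => y <-; exists y; by rewrite /= addr0 opprK mulr2n.
  + exists id; split.
      by split=> //; exists id.
    have idD : forall x y : G, id (x + y) = id x + id y by [].
    have cid x y : twisted_conj id x y -> x = y.
      by case=> z ->; rewrite addrC addKr.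
    have uq : forall n, exists s : seq G, size s = n /\ uniq s.
      elim=> [|n [s [sz us]]]; first by exists [::].
      case: (classic (exists x, x \notin s)) => [[x xs]|nx].
        by exists (x :: s); rewrite /= sz xs us.
      exfalso; case: hnt => x /eqP; apply.
      have cov : forall x : G, exists2 y, y \in s & twisted_conj id x y.
        move=> w; exists w; last by exists 0; rewrite /= add0r subr0.
        by apply: NNPP => h; apply: nx; exists w; apply/negP.
      have := @cover_all _ id idD hdiv s cov x.
      by case=> z ->; rewrite subrr.
    move=> n; case: (uq n) => s [sz us]; exists s; split=> // i j hi hj /cid e.
    by apply/eqP; rewrite -(nth_uniq 0 hi hj us) e.
Qed.
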